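(* Let $m\ge1$, $k\ge1$, $r>0$ and let $F:\mathbb{R}^{m+1}\to\mathbb{R}^{n+1}$ be a harmonic form of degree $k$ (each component is a harmonic homogeneous polynomial of degree $k$, i.e. $\Delta^0F=0$) with $|F(\bar x)|^2=r^2|\bar x|^{2k}$ for all $\bar x$, so that $F$ restricts to a map $\varphi:\mathbb{S}^m\to\mathbb{S}^n(r)$. Then at every point of $\mathbb{S}^m$, $$\Delta^0\big(|d^0F|^2\big)=-2r^2k(k-1)(m+2k-1)(m+2k-3),$$ $$|\nabla^0 d^0F|^2=r^2k(k-1)\big(m^2-4m+3+4k(m-2)+4k^2\big).$$
   Context: $\mathbb{S}^m$ is the unit sphere in $\mathbb{R}^{m+1}$ and $\mathbb{S}^n(r)$ the sphere of radius $r$ centred at $0$ in $\mathbb{R}^{n+1}$. Operators on $\mathbb{R}^{m+1}$: $\Delta^0 f=-\sum_i\partial^2 f/\partial(x^i)^2$ (applied componentwise to vector functions); $|d^0F|^2=\sum_{i=1}^{m+1}|\partial F/\partial x^i|^2$; $|\nabla^0d^0F|^2=\sum_{i,j=1}^{m+1}|\partial^2F/\partial x^i\partial x^j|^2$. *)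

(* Defs.v *)
From HB Require Import structures.
From mathcomp Require Import all_boot all_order all_algebra.
From mathcomp Require Import reals.
From mathcomp Require Import mpoly.
Set Implicit Arguments. Unset Strict Implicit. Unset Printing Implicit Defensive.
Import Order.TTheory GRing.Theory Num.Theory.
Local Open Scope ring_scope.

(* Euclidean Laplacian (positive, i.e. sum of second derivatives) of a
   polynomial in the m+1 variables x^1..x^{m+1}; the paper's
   Delta^0 f = - mlap f. *)
Definition mlap {R : comRingType} {m : nat} (p : {mpoly R[m]}) : {mpoly R[m]} :=
  \sum_(i < m) (p^`M(i))^`M(i).

Definition dF2 {R : comRingType} {m n : nat} (F : 'I_n -> {mpoly R[m]}) : {mpoly R[m]} :=
  \sum_(j < n) \sum_(i < m) ((F j)^`M(i)) ^+ 2.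

Definition hessF2 {R : comRingType} {m n : nat} (F : 'I_n -> {mpoly R[m]})
  (x : 'I_m -> R) : R :=
  \sum_(j < n) \sum_(i < m) \sum_(l < m) (((F j)^`M(i))^`M(l)).@[x] ^+ 2.

(* Main.v *)
Require Import Defs.
From HB Require Import structures.
From mathcomp Require Import all_boot all_order all_algebra.
From mathcomp Require Import reals.
From mathcomp Require Import mpoly.
From mathcomp Require Import ring zify.
Set Implicit Arguments. Unset Strict Implicit. Unset Printing Implicit Defensive.
Import Order.TTheory GRing.Theory Num.Theory.
Local Open Scope ring_scope.

Section Lap.
Variables (R : comRingType) (N : nat).
Implicit Types p q : {mpoly R[N]}.

Lemma mderivXU (i j : 'I_N) : ('X_i : {mpoly R[N]})^`M(j) = (i == j)%:R.
Proof.
rewrite mderivX mnm1E; case: eqP => [->|_]; last by rewrite scale0r.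
by rewrite scale1r (_ : (U_(j) - U_(j))%MM = 0%MM) ?mpolyX0 //; apply/mnmP=> l; rewrite !mnmE subnn.
Qed.

Lemma mderiv1 i : (1 : {mpoly R[N]})^`M(i) = 0.
Proof. by rewrite -mpolyX0 mderivX mnmE scale0r. Qed.

Lemma mlap0 : mlap (0 : {mpoly R[N]}) = 0.
Proof. by rewrite /mlap big1 // => i _; rewrite !mderiv0. Qed.

Lemma mlapD p q : mlap (p + q) = mlap p + mlap q.
Proof. by rewrite /mlap -big_split; apply: eq_bigr => i _; rewrite !mderivD. Qed.

Lemma mlapN p : mlap (- p) = - mlap p.
Proof. by rewrite /mlap -sumrN; apply: eq_bigr => i _; rewrite !mderivN. Qed.

Lemma mlapZ c p : mlap (c *: p) = c *: mlap p.
Proof. by rewrite /mlap scaler_sumr; apply: eq_bigr => i _; rewrite !mderivZ. Qed.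

Lemma mlapMn p k : mlap (p *+ k) = mlap p *+ k.
Proof. by rewrite /mlap -sumrMnl; apply: eq_bigr => i _; rewrite !mderivMn. Qed.

Lemma mlap_sum (I : Type) (r : seq I) (P : pred I) (G : I -> {mpoly R[N]}) :
  mlap (\sum_(i <- r | P i) G i) = \sum_(i <- r | P i) mlap (G i).
Proof. exact: (big_morph _ mlapD mlap0). Qed.

Lemma mderiv_sum i (I : Type) (r : seq I) (P : pred I) (G : I -> {mpoly R[N]}) :
  (\sum_(l <- r | P l) G l)^`M(i) = \sum_(l <- r | P l) (G l)^`M(i).
Proof.
elim: r => [|a r IH]; rewrite ?big_nil ?big_cons ?mderiv0 //.
by case: (P a); rewrite ?mderivD IH.
Qed.

Lemma mlapM p q : mlap (p * q) =
  mlap p * q + (\sum_i p^`M(i) * q^`M(i)) *+ 2 + p * mlap q.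
Proof.
rewrite /mlap mulr_suml mulr_sumr -sumrMnl -!big_split /=.
apply: eq_bigr => i _; rewrite !mderivM !mderivD !mderivM. by rewrite mulr2n !addrA.
Qed.

Lemma mlap_mderiv i p : mlap (p^`M(i)) = (mlap p)^`M(i).
Proof.
rewrite /mlap mderiv_sum; apply: eq_bigr => l _.
by rewrite (mderiv_comm i l) (mderiv_comm i l).
Qed.

Definition rho : {mpoly R[N]} := \sum_(i < N) 'X_i ^+ 2.

Lemma mderiv_rho i : rho^`M(i) = 'X_i *+ 2.
Proof.
rewrite /rho mderiv_sum (bigD1 i) //= big1 => [|l /negPf nli].
  by rewrite addr0 expr2 mderivM mderivXU eqxx /=; ring.
by rewrite expr2 mderivM mderivXU nli /=; ring.
Qed.

Lemma mderiv_rhoX i k : (rho ^+ k.+1)^`M(i) = 'X_i * rho ^+ k *+ (2 * k.+1).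
Proof.
elim: k => [|k IH]; first by rewrite expr1 mderiv_rho; ring.
rewrite exprS mderivM IH mderiv_rho exprS; ring.
Qed.

Lemma euler_rho k : \sum_i 'X_i * (rho ^+ k)^`M(i) = rho ^+ k *+ (2 * k).
Proof.
case: k => [|k]; first by rewrite expr0 big1 // => i _; rewrite mderiv1 mulr0.
transitivity (\sum_i ('X_i ^+ 2 * rho ^+ k) *+ (2 * k.+1)).
  by apply: eq_bigr => i _; rewrite mderiv_rhoX; set y := rho ^+ k; ring.
by rewrite sumrMnl -mulr_suml exprS.
Qed.

Lemma mlap_rhoX k : mlap (rho ^+ k.+1) = rho ^+ k *+ (2 * k.+1 * (2 * k + N)).
Proof.
rewrite /mlap; under eq_bigr do rewrite mderiv_rhoX mderivMn mderivM mderivXU eqxx /= mul1r.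
rewrite sumrMnl big_split /= euler_rho sumr_const card_ord.
by rewrite -mulrnDr -mulrnA addnC mulnC.
Qed.

End Lap.

Section Ident.
Variable R : numDomainType.

Lemma poly_eval0 (Q : {poly R}) : (forall t, Q.[t] = 0) -> Q = 0.
Proof.
move=> H; apply: (@roots_geq_poly_eq0 _ _ [seq i%:R | i <- iota 0 (size Q)]).
- by apply/allP => t /mapP [i _ ->]; rewrite /root H.
- rewrite map_inj_uniq ?iota_uniq // => i j /eqP; rewrite eqr_nat => /eqP //.
- by rewrite size_map size_iota.
Qed.

Definition ext n (x : 'I_n -> R) (t : R) (i : 'I_n.+1) : R :=
  if unlift ord_max i is Some j then x j else t.

Definition mtail n (m : 'X_{1..n.+1}) : 'X_{1..n} :=
  [multinom m (lift ord_max i) | i < n].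

Lemma mtail_eq n (m m0 : 'X_{1..n.+1}) :
  m ord_max = m0 ord_max -> mtail m = mtail m0 -> m = m0.
Proof.
move=> h1 /mnmP h2; apply/mnmP => i; case: (unliftP ord_max i) => [j ->|->] //.
by have := h2 j; rewrite !mnmE.
Qed.

Lemma mpoly_eval0 n (p : {mpoly R[n]}) : (forall x, p.@[x] = 0) -> p = 0.
Proof.
elim: n p => [|n IH] p H.
  have h0 := H (fun _ => 0); rewrite (nvar0_mpolyC p) mevalC in h0.
  by rewrite (nvar0_mpolyC p) h0 mpolyC0.
set S := msize p.
pose P d : {mpoly R[n]} :=
  \sum_(m <- msupp p) (p@_m * (m ord_max == d)%:R) *: 'X_[mtail m].
have evP d x : (P d).@[x] =
    \sum_(m <- msupp p) p@_m * (m ord_max == d)%:R * \prod_(i < n) x i ^+ mtail m i.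
  rewrite /P raddf_sum /=; apply: eq_bigr => m _.
  by rewrite mevalZ mevalX.
have evp x t : p.@[ext x t] =
    \sum_(m <- msupp p) p@_m * (\prod_(i < n) x i ^+ mtail m i) * t ^+ (m ord_max).
  rewrite mevalE; apply: eq_bigr => m _; rewrite big_ord_recr /= -mulrA; congr (_ * (_ * _)).
    apply: eq_bigr => i _; rewrite mnmE.
    have -> : widen_ord (leqnSn n) i = lift ord_max i by apply: val_inj; exact: (esym (lift_max i)).
    by rewrite /ext liftK.
  by rewrite /ext unlift_none.
have P0 d : (d < S)%N -> P d = 0.
  move=> ltdS; apply: IH => x.
  pose Q := \poly_(d < S) (P d).@[x].
  have : Q = 0.
    apply: poly_eval0 => t; rewrite horner_poly -[RHS](H (ext x t)) evp.
    under eq_bigr do rewrite evP mulr_suml.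
    rewrite exchange_big /=; apply: eq_big_seq => m msm.
    have ltm : (m ord_max < S)%N.
      apply: leq_ltn_trans (msize_mdeg_lt msm).
      by rewrite mdegE (bigD1 ord_max) //= leq_addr.
    rewrite (bigD1 (Ordinal ltm)) //= eqxx (_ : true%:R = 1 :> R) // (mulr1 p@_m) [X in _ + X]big1 ?addr0 //.
    by move=> i /negPf; rewrite -val_eqE /= eq_sym => ->; rewrite mulr0 mul0r mul0r.
  by move/(congr1 (fun q : {poly R} => q`_d)); rewrite coef_poly ltdS coef0.
apply/mpolyP => m0; rewrite mcoeff0.
have [msm0|nm0] := boolP (m0 \in msupp p); last by apply/eqP; rewrite mcoeff_eq0.
have ltm : (m0 ord_max < S)%N.
  apply: leq_ltn_trans (msize_mdeg_lt msm0).
  by rewrite mdegE (bigD1 ord_max) //= leq_addr.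
have := congr1 (mcoeff (mtail m0)) (P0 _ ltm); rewrite mcoeff0 /P raddf_sum /=.
rewrite (bigD1_seq m0) //= ?msupp_uniq // mcoeffZ mcoeffX !eqxx mulr1 mulr1 big1_seq ?addr0 //.
move=> m /andP [nm _]; rewrite mcoeffZ mcoeffX.
case: eqP => [e1|]; last by rewrite mulr0 mul0r.
case: eqP => [e2|]; last by rewrite mulr0.
by move: nm; rewrite (mtail_eq e1 e2) eqxx.
Qed.

End Ident.

Lemma mlap1 (R : comNzRingType) N : mlap (1 : {mpoly R[N]}) = 0.
Proof. by rewrite /mlap big1 // => i _; rewrite mderiv1 mderiv0. Qed.

Lemma meval_rho (R : comNzRingType) N (x : 'I_N -> R) :
  (rho R N).@[x] = \sum_(i < N) x i ^+ 2.
Proof. by rewrite /rho rmorph_sum; apply: eq_bigr => i _; rewrite rmorphXn /= mevalXU. Qed.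

Theorem mainTheorem2 (R : realType) (m n k : nat) (r : R)
  (F : 'I_n.+1 -> {mpoly R[m.+1]}) :
  (1 <= m)%N -> (1 <= k)%N -> 0 < r ->
  (forall j, F j \is k.-homog) ->
  (forall j, mlap (F j) = 0) ->
  (forall x : 'I_m.+1 -> R,
     \sum_(j < n.+1) ((F j).@[x]) ^+ 2 = r ^+ 2 * (\sum_(i < m.+1) x i ^+ 2) ^+ k) ->
  forall x : 'I_m.+1 -> R, \sum_(i < m.+1) x i ^+ 2 = 1 ->
    (- mlap (dF2 F)).@[x]
      = - 2 * r ^+ 2 * k%:R * (k%:R - 1) * (m%:R + 2 * k%:R - 1) * (m%:R + 2 * k%:R - 3)
    /\ hessF2 F x
      = r ^+ 2 * k%:R * (k%:R - 1)
        * (m%:R ^+ 2 - 4 * m%:R + 3 + 4 * k%:R * (m%:R - 2) + 4 * k%:R ^+ 2).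
Proof.
move=> m1 k1 r0 _ harm Hsph x x1.
have Hpoly : \sum_(j < n.+1) (F j) ^+ 2 = r ^+ 2 *: (rho R m.+1) ^+ k.
  apply/eqP; rewrite -subr_eq0; apply/eqP; apply: mpoly_eval0 => y.
  rewrite rmorphB /= rmorph_sum /= mevalZ rmorphXn /= meval_rho -Hsph.
  by apply/eqP; rewrite subr_eq0; apply/eqP; apply: eq_bigr => j _; rewrite rmorphXn.
have HdF : dF2 F *+ 2 = r ^+ 2 *: mlap ((rho R m.+1) ^+ k).
  rewrite -mlapZ -Hpoly mlap_sum /dF2 -sumrMnl; apply: eq_bigr => j _.
  rewrite expr2 mlapM harm mul0r mulr0 add0r addr0; congr (_ *+ 2).
have Hhess : mlap (dF2 F) = (\sum_(j < n.+1) \sum_(i < m.+1) \sum_(l < m.+1)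
      (((F j)^`M(i))^`M(l)) ^+ 2) *+ 2.
  rewrite /dF2 mlap_sum -sumrMnl; apply: eq_bigr => j _.
  rewrite mlap_sum -sumrMnl; apply: eq_bigr => i _.
  rewrite expr2 mlapM mlap_mderiv harm mderiv0 mul0r mulr0 add0r addr0.
  congr (_ *+ 2); by apply: eq_bigr => l _; rewrite expr2.
have hH : hessF2 F x *+ 2 = (mlap (dF2 F)).@[x].
  rewrite Hhess rmorphMn /= rmorph_sum /=; congr (_ *+ 2); apply: eq_bigr => j _.
  rewrite rmorph_sum /=; apply: eq_bigr => i _.
  rewrite rmorph_sum /=; apply: eq_bigr => l _.
  by rewrite rmorphXn.
case: k k1 Hsph Hpoly HdF => [|k'] // _ _ _ HdF.
rewrite mlap_rhoX in HdF.
have HL : mlap (dF2 F) *+ 2 = r ^+ 2 *: mlap ((rho R m.+1) ^+ k') *+ (2 * k'.+1 * (2 * k' + m.+1)).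
  by rewrite -mlapMn HdF mlapZ mlapMn scalerMnr.
set H := hessF2 F x in hH *.
clear HdF; case: k' HL => [|k''] HL.
  rewrite expr0 mlap1 scaler0 mul0rn in HL.
  have := congr1 (meval x) HL; rewrite rmorphMn /= -hH rmorph0 => h.
  have h0 : H = 0.
    by move/eqP: h; rewrite -mulrnA mulrn_eq0 /= => /eqP.
  by split; rewrite ?rmorphN /= -?hH h0; ring.
rewrite mlap_rhoX in HL.
have := congr1 (meval x) HL.
rewrite rmorphMn /= -hH rmorphMn /= mevalZ rmorphMn /= rmorphXn /= meval_rho x1 expr1n => h.
have eh : H = r ^+ 2 * (1 *+ (2 * k''.+1 * (2 * k'' + m.+1))) *+ (2 * k''.+2 * (2 * k''.+1 + m.+1)) / 4.
  by rewrite -h; field.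
by split; rewrite ?rmorphN /= -?hH eh; field.
Qed.
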